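(* Let $L\ge 1$ and consider the following Markov process on $\{0,1\}^L$, with coordinates indexed by $\{0,1,\dots,L-1\}$ and started from an arbitrary state $\Gamma^0$. Given the state $\Gamma^i$, the state $\Gamma^{i+1}$ is obtained by choosing a permutation $\sigma$ of $\{0,\dots,L-1\}$ uniformly at random (independently of the past), setting $\Delta_0=\Gamma^i$, and for $1\le j\le L$ letting $\Delta_j$ be obtained from $\Delta_{j-1}$ by setting $\Delta_j(\sigma(j-1))=\Delta_{j-1}((\sigma(j-1)+1)\bmod L)$ and $\Delta_j(t)=\Delta_{j-1}(t)$ for all $t\ne\sigma(j-1)$; finally $\Gamma^{i+1}=\Delta_L$. Let $T$ be the first time at which the process is in the all-$0$ or the all-$1$ state. Then for every integer $a\ge1$, $\Pr[T\ge 4aL^2]\le L\,2^{-a}$. *)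

(* Defs.v *)
From mathcomp Require Import all_boot all_order all_algebra all_fingroup.
Set Implicit Arguments. Unset Strict Implicit. Unset Printing Implicit Defensive.
Import GRing.Theory Num.Theory.

Definition state (L : nat) := {ffun 'I_L -> bool}.

Definition upd (L : nat) (g : state L) (s : 'I_L) : state L :=
  [ffun t => if t == s then g (ordS s) else g t].

(* One step of the chain driven by the permutation sigma:
   Delta_0 = g, Delta_j = upd Delta_{j-1} (sigma (j-1)) for j = 1..L,
   result Delta_L.  (enum 'I_L lists 0,1,...,L-1 in increasing order.) *)
Definition step (L : nat) (sigma : {perm 'I_L}) (g : state L) : state L :=
  foldl (fun d j => upd d (sigma j)) g (enum 'I_L).

Definition gam (L : nat) (g0 : state L) (ss : seq {perm 'I_L}) (i : nat)
  : state L :=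
  foldl (fun g sigma => step sigma g) g0 (take i ss).

Definition absorbed (L : nat) (g : state L) : bool :=
  [forall t, g t == false] || [forall t, g t == true].

(* Pr[T >= n] where T = first time the process is absorbed: the event
   {Gamma^i not absorbed for all i < n} depends only on the first n
   permutations, which are i.i.d. uniform on S_L; so the probability is the
   proportion of n-tuples of permutations realizing it. *)
Definition prob_T_ge (L : nat) (g0 : state L) (n : nat) : rat :=
  (#|[set ss : n.-tuple {perm 'I_L} |
        [forall i : 'I_n, ~~ absorbed (gam g0 ss i)]]|%:R
   / (#|{perm 'I_L}| ^ n)%:R)%R.

(* Main.v *)
Require Import Defs.
From mathcomp Require Import all_boot all_order all_algebra all_fingroup.
From mathcomp Require Import zify ring lra.
Set Implicit Arguments. Unset Strict Implicit. Unset Printing Implicit Defensive.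
Import Order.TTheory GRing.Theory Num.Theory.

Definition rho (L : nat) (x t : 'I_L) : 'I_L := if t == x then ordS x else t.
Definition pil (L : nat) (l : seq 'I_L) (s : 'I_L) : 'I_L := foldr (@rho L) s l.
Definition sites (L : nat) (sigma : {perm 'I_L}) : seq 'I_L := map sigma (enum 'I_L).

Lemma foldl_upd (L : nat) (g : state L) (l : seq 'I_L) :
  foldl (@upd L) g l = [ffun s => g (pil l s)].
Proof.
elim/last_ind: l => [|l x IH]; first by apply/ffunP => s; rewrite !ffunE.
rewrite foldl_rcons IH; apply/ffunP => s; rewrite !ffunE /pil foldr_rcons /rho.
by case: eqP.
Qed.

Lemma step_pi (L : nat) (sigma : {perm 'I_L}) (g : state L) :
  step sigma g = [ffun s => g (pil (sites sigma) s)].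
Proof.
rewrite /step /sites -foldl_upd; elim: (enum 'I_L) g => [//|x l IH] g /=.
by rewrite IH.
Qed.

Lemma pil_notin (L : nat) (l : seq 'I_L) t : t \notin l -> pil l t = t.
Proof.
elim: l => [//|x l IH]; rewrite inE negb_or => /andP[tx tl].
by rewrite /pil /= -/(pil l t) IH // /rho (negbTE tx).
Qed.

Lemma pil_cat (L : nat) (l1 l2 : seq 'I_L) t : pil (l1 ++ l2) t = pil l1 (pil l2 t).
Proof. by rewrite /pil foldr_cat. Qed.

Lemma pil_rot (L : nat) (l : seq 'I_L) t :
  pil (map (@ordS L) l) (ordS t) = ordS (pil l t).
Proof.
elim: l => [//|x l IH]; rewrite /pil /= -!/(pil _ _) IH /rho.
by rewrite (inj_eq (@ordS_inj L)); case: eqP.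
Qed.

Lemma pil_split (L : nat) (P M S : seq 'I_L) x y s :
  pil (P ++ x :: M ++ y :: S) s = pil P (rho x (pil M (rho y (pil S s)))).
Proof. by rewrite pil_cat /pil /= -!/(pil _ _) pil_cat. Qed.

Lemma rho_eq L (x : 'I_L) : rho x x = ordS x.
Proof. by rewrite /rho eqxx. Qed.
Lemma rho_neq L (x t : 'I_L) : t != x -> rho x t = t.
Proof. by rewrite /rho => /negbTE ->. Qed.

Lemma core_swap L (u : 'I_L) (P M S : seq 'I_L) s :
  u != ordS u -> u \notin P -> u \notin M -> u \notin S ->
  ordS u \notin P -> ordS u \notin M -> ordS u \notin S ->
  ordS (ordS u) \notin P -> ordS (ordS u) \notin M ->
  pil (P ++ u :: M ++ ordS u :: S) s = pil (P ++ ordS u :: M ++ u :: S) s \/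
  pil (P ++ u :: M ++ ordS u :: S) s = ordS u.
Proof.
move=> uu1 uP uM uS u1P u1M u1S u2P u2M; rewrite !pil_split.
have u1u : ordS u != u by rewrite eq_sym.
have [->|t1u] := eqVneq (pil S s) u.
  by right; rewrite (rho_neq uu1) (pil_notin uM) rho_eq pil_notin.
have [->|t1u1] := eqVneq (pil S s) (ordS u).
  rewrite rho_eq (pil_notin u2M).
  have [e|ne] := eqVneq (ordS (ordS u)) u.
    by right; rewrite {1}e rho_eq pil_notin.
  left; rewrite (rho_neq ne) (pil_notin u2P).
  by rewrite (rho_neq u1u) (pil_notin u1M) rho_eq pil_notin.
rewrite (rho_neq t1u1) (rho_neq t1u).
have [->|t2u] := eqVneq (pil M (pil S s)) u.
  by right; rewrite rho_eq pil_notin.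
have [->|t2u1] := eqVneq (pil M (pil S s)) (ordS u).
  by right; rewrite (rho_neq u1u) pil_notin.
by left; rewrite (rho_neq t2u) (rho_neq t2u1).
Qed.

Lemma core_u L (u : 'I_L) (P M S : seq 'I_L) :
  u != ordS u -> u \notin P -> u \notin M -> u \notin S ->
  ordS u \notin P -> ordS u \notin M -> ordS u \notin S ->
  ordS (ordS u) \notin P -> ordS (ordS u) \notin M ->
  pil (P ++ u :: M ++ ordS u :: S) u = ordS u /\
  pil (P ++ ordS u :: M ++ u :: S) u = ordS (ordS u).
Proof.
move=> uu1 uP uM uS u1P u1M u1S u2P u2M; rewrite !pil_split (pil_notin uS).
split; first by rewrite (rho_neq uu1) (pil_notin uM) rho_eq pil_notin.
by rewrite rho_eq (pil_notin u1M) rho_eq pil_notin.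
Qed.

Lemma ordS_neq L (x : 'I_L) : (1 < L)%N -> ordS x != x.
Proof.
move=> L1; apply/eqP => /(congr1 val) /=.
have xL := ltn_ord x.
case: (ltngtP x.+1 L) => [h|h|h].
- by rewrite modn_small // => /eqP; rewrite gtn_eqF.
- by move: (leq_trans h xL); rewrite ltnn.
- by rewrite h modnn => e; move: L1; rewrite -h -e.
Qed.

Lemma idx_pre (T : eqType) (A B : seq T) y : y \in A -> (index y (A ++ B) < size A)%N.
Proof. by move=> h; rewrite index_cat h index_mem. Qed.

Lemma idx_mid (T : eqType) (A B : seq T) x : x \notin A -> index x (A ++ x :: B) = size A.
Proof. by move=> h; rewrite index_cat (negbTE h) /= eqxx addn0. Qed.

Lemma decomp L (l : seq 'I_L) (u : 'I_L) :
  uniq l -> (forall x, x \in l) -> (index u l < index (ordS u) l)%N ->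
  (ordS (ordS u) == u) || (index (ordS u) l < index (ordS (ordS u)) l)%N ->
  exists P M S, [/\ l = P ++ u :: M ++ ordS u :: S,
   [/\ u \notin P, u \notin M & u \notin S],
   [/\ ordS u \notin P, ordS u \notin M & ordS u \notin S] &
   ordS (ordS u) \notin P /\ ordS (ordS u) \notin M].
Proof.
move=> ul full lt12 E.
have fu := full u.
case/splitPr: fu ul lt12 E full => P R ul lt12 E full.
have uP : u \notin P.
  by move: ul; rewrite cat_uniq => /and3P[_ /hasPn h _]; apply: h; rewrite inE eqxx.
rewrite idx_mid // in lt12.
have u1P : ordS u \notin P.
  by apply: contraTN lt12 => h; rewrite -leqNgt ltnW // idx_pre.
have uu1 : u != ordS u.
  by apply: contraTN lt12 => /eqP <-; rewrite idx_mid // ltnn.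
have u1R : ordS u \in R.
  by move: (full (ordS u)); rewrite mem_cat (negbTE u1P) inE eq_sym (negbTE uu1).
case/splitPr: u1R ul E lt12 full => M S ul E lt12 full.
move: (ul); rewrite cat_uniq => /and3P[_ hP ul2].
move: ul2; rewrite /= cat_uniq /= => /and5P[].
rewrite mem_cat inE => /norP[uM /norP[_ uS]] _ /norP[u1M _] u1S _.
have u1l : index (ordS u) (P ++ u :: M ++ ordS u :: S) = (size P + (size M).+1)%N.
  rewrite -cat_cons catA idx_mid ?size_cat ?addnS //.
  by rewrite mem_cat negb_or u1P inE negb_or eq_sym uu1.
rewrite u1l in E.
have [e|ne] := eqVneq (ordS (ordS u)) u.
  by exists P, M, S; split; rewrite // e.
rewrite (negbTE ne) /= in E.
have u2P : ordS (ordS u) \notin P.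
  apply/negP => h; move: E; rewrite ltnNge ltnW //.
  by apply: leq_trans (idx_pre _ h) (leq_addr _ _).
have u2M : ordS (ordS u) \notin M.
  apply/negP => h; move: E; rewrite ltnNge -cat_cons catA ltnW //.
  apply: leq_trans (idx_pre _ _) _; first by rewrite mem_cat inE h !orbT.
  by rewrite size_cat /= addnS.
by exists P, M, S; split.
Qed.

Definition Xc (L : nat) (g : state L) : nat := \sum_(t : 'I_L) (g t : nat).
Definition tau (L : nat) (sigma : {perm 'I_L}) (x : 'I_L) : nat := index x (sites sigma).
Definition Ev (L : nat) (u : 'I_L) (sigma : {perm 'I_L}) : bool :=
  (ordS (ordS u) == u) ||
  ((tau sigma u < tau sigma (ordS (ordS u)))%N && (tau sigma (ordS u) < tau sigma (ordS (ordS u)))%N).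

Lemma sites_uniq L (sigma : {perm 'I_L}) : uniq (sites sigma).
Proof. by rewrite map_inj_uniq ?enum_uniq //; apply: perm_inj. Qed.

Lemma sites_full L (sigma : {perm 'I_L}) x : x \in sites sigma.
Proof. by rewrite -(permKV sigma x); apply: map_f; rewrite mem_enum. Qed.

Lemma sites_mul L (sigma t : {perm 'I_L}) : sites (sigma * t)%g = map t (sites sigma).
Proof. by rewrite /sites -map_comp; apply: eq_map => j; rewrite permM. Qed.

Lemma tau_mul L (sigma : {perm 'I_L}) x y z :
  tau (sigma * tperm x y)%g z = tau sigma (tperm x y z).
Proof.
by rewrite /tau sites_mul -{1}(tpermK x y z) index_map //; apply: perm_inj.
Qed.

Lemma sum_lt L (F G : 'I_L -> nat) u :
  (forall s, F s <= G s)%N -> (F u < G u)%N -> (\sum_s F s < \sum_s G s)%N.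
Proof.
move=> le lt; rewrite (bigD1 u) //= [X in (_ < X)%N](bigD1 u) //=.
by rewrite -addSn leq_add // leq_sum.
Qed.

Lemma map_tperm_id L (x y : 'I_L) (P : seq 'I_L) :
  x \notin P -> y \notin P -> map (tperm x y) P = P.
Proof.
move=> xP yP; rewrite -[RHS]map_id; apply/eq_in_map => z zP.
by apply: tpermD; [move: xP|move: yP]; apply: contraNN => /eqP ->.
Qed.

Lemma Ydiff_lt L (g : state L) (u : 'I_L) (sigma : {perm 'I_L}) :
  (1 < L)%N -> g (ordS u) != g (ordS (ordS u)) ->
  (tau sigma u < tau sigma (ordS u))%N -> Ev u sigma ->
  Xc (step sigma g) != Xc (step (sigma * tperm u (ordS u))%g g).
Proof.
move=> L1 gne lt12 E.
have uu1 : u != ordS u by rewrite eq_sym ordS_neq.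
have E' : (ordS (ordS u) == u) ||
   (index (ordS u) (sites sigma) < index (ordS (ordS u)) (sites sigma))%N.
  by move: E; rewrite /Ev => /orP [->|/andP[_ h]] //; rewrite h orbT.
have [P [M [S [el [uP uM uS] [u1P u1M u1S] [u2P u2M]]]]] :=
  decomp (sites_uniq sigma) (sites_full sigma) lt12 E'.
rewrite /Xc !step_pi sites_mul el.
have -> : map (tperm u (ordS u)) (P ++ u :: M ++ ordS u :: S) =
          P ++ ordS u :: M ++ u :: S.
  by rewrite map_cat /= map_cat /= tpermL tpermR !map_tperm_id.
have [ea eb] := core_u uu1 uP uM uS u1P u1M u1S u2P u2M.
have cs := core_swap _ uu1 uP uM uS u1P u1M u1S u2P u2M.
case: (boolP (g (ordS u))) => gu1.
  rewrite neq_ltn; apply/orP; right; apply: (@sum_lt _ _ _ u).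
    move=> s; rewrite !ffunE; case: (cs s) => [->//|->]; by rewrite gu1; case: (g _).
  by rewrite !ffunE ea eb gu1; move: gne; rewrite gu1; case: (g _).
rewrite neq_ltn; apply/orP; left; apply: (@sum_lt _ _ _ u).
  move=> s; rewrite !ffunE; case: (cs s) => [->//|->]; by rewrite (negbTE gu1).
by rewrite !ffunE ea eb (negbTE gu1); move: gne; rewrite (negbTE gu1); case: (g _).
Qed.

Lemma Ev_mul L (u : 'I_L) (sigma : {perm 'I_L}) :
  (1 < L)%N -> Ev u (sigma * tperm u (ordS u))%g = Ev u sigma.
Proof.
move=> L1; rewrite /Ev; have [//|ne] := eqVneq (ordS (ordS u)) u.
rewrite /= !tau_mul tpermL tpermR tpermD //; last by rewrite (inj_eq (@ordS_inj L)) eq_sym ordS_neq.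
  by rewrite andbC. by rewrite eq_sym.
Qed.

Lemma tau_inj L (sigma : {perm 'I_L}) x y : tau sigma x = tau sigma y -> x = y.
Proof.
move=> e; rewrite -(nth_index x (sites_full sigma x)) -(nth_index x (sites_full sigma y)).
by rewrite /tau in e; rewrite e.
Qed.

Lemma Ydiff L (g : state L) (u : 'I_L) (sigma : {perm 'I_L}) :
  (1 < L)%N -> g (ordS u) != g (ordS (ordS u)) -> Ev u sigma ->
  Xc (step sigma g) != Xc (step (sigma * tperm u (ordS u))%g g).
Proof.
move=> L1 gne E.
have uu1 : u != ordS u by rewrite eq_sym ordS_neq.
case: (ltngtP (tau sigma u) (tau sigma (ordS u))) => h.
- exact: Ydiff_lt.
- set s' := (sigma * tperm u (ordS u))%g.
  have -> : sigma = (s' * tperm u (ordS u))%g.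
    by rewrite /s' -mulgA tperm2 mulg1.
  rewrite eq_sym; apply: Ydiff_lt => //; last by rewrite Ev_mul.
  by rewrite /s' !tau_mul tpermL tpermR.
- by move/tau_inj: h => h; rewrite {1}h eqxx in uu1.
Qed.

Lemma mult_inj L (t : {perm 'I_L}) : t = t^-1%g -> injective (fun s : {perm 'I_L} => (s * t)%g).
Proof.
move=> tV s1 s2 /(congr1 (fun s => (s * t^-1)%g)) /=.
by rewrite -!mulgA mulgV !mulg1.
Qed.

Lemma reindex_t L (t : {perm 'I_L}) (F : {perm 'I_L} -> nat) : t = t^-1%g ->
  \sum_s F (s * t)%g = \sum_s F s.
Proof. by move=> tV; rewrite [RHS](reindex_inj (mult_inj tV)). Qed.

Lemma tpermVV L (x y : 'I_L) : tperm x y = (tperm x y)^-1%g.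
Proof. by rewrite tpermV. Qed.

Definition Mx L (sigma : {perm 'I_L}) (x y z : 'I_L) : bool :=
  (tau sigma y < tau sigma x)%N && (tau sigma z < tau sigma x)%N.

Lemma count3 L (x y z : 'I_L) : x != y -> y != z -> x != z ->
  (#|{perm 'I_L}| <= 3 * \sum_s (Mx s x y z : nat))%N.
Proof.
move=> xy yz xz.
have e1 : \sum_s (Mx s y x z : nat) = \sum_s (Mx s x y z : nat).
  rewrite -(reindex_t _ (tpermVV x y)); apply: eq_bigr => s _.
  rewrite /Mx !tau_mul tpermL tpermR tpermD //.
have e2 : \sum_s (Mx s z y x : nat) = \sum_s (Mx s x y z : nat).
  rewrite -(reindex_t _ (tpermVV x z)); apply: eq_bigr => s _.
  rewrite /Mx !tau_mul tpermL tpermR tpermD //.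
  by rewrite eq_sym.
have tot : #|{perm 'I_L}| <= \sum_s ((Mx s x y z : nat) + (Mx s y x z : nat) + (Mx s z y x : nat)).
  rewrite -sum1_card leq_sum // => s _.
  rewrite /Mx.
  have ne : forall a b, a != b -> tau s a != tau s b.
    by move=> a b ab; apply: contra ab => /eqP /tau_inj ->.
  move: (ne _ _ xy) (ne _ _ yz) (ne _ _ xz).
  case: (ltngtP (tau s x) (tau s y)); case: (ltngtP (tau s x) (tau s z));
    case: (ltngtP (tau s y) (tau s z)) => //= *; lia.
rewrite !big_split /= e1 e2 in tot.
apply: (leq_trans tot); by rewrite !mulSn mul0n addn0 addnA.
Qed.

Lemma good_count L (g : state L) (u : 'I_L) :
  (1 < L)%N -> g (ordS u) != g (ordS (ordS u)) ->
  (#|{perm 'I_L}| <= 6 * \sum_s (Xc (step s g) != Xc g : nat))%N.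
Proof.
move=> L1 gne.
set t := tperm u (ordS u).
have uu1 : u != ordS u by rewrite eq_sym ordS_neq.
have A3 : (#|{perm 'I_L}| <= 3 * \sum_s (Ev u s : nat))%N.
  have [e|ne] := eqVneq (ordS (ordS u)) u.
    rewrite -sum1_card -[X in (X <= _)%N]mul1n leq_mul //.
    by rewrite leq_sum // => s _; rewrite /Ev e eqxx.
  apply: (leq_trans (count3 (ne : ordS (ordS u) != u) uu1 _)).
    by rewrite (inj_eq (@ordS_inj L)) ordS_neq.
  rewrite leq_mul2l; apply/orP; right; apply: leq_sum => s _.
  by rewrite /Ev /Mx (negbTE ne).
set B := \sum_s ((Ev u s && (Xc (step s g) != Xc g)) : nat).
have eB : \sum_s ((Ev u (s * t)%g && (Xc (step (s * t)%g g) != Xc g)) : nat) = B.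
  exact: reindex_t (tpermVV _ _).
have A2 : (\sum_s (Ev u s : nat) <= 2 * B)%N.
  rewrite mul2n -addnn -{1}eB -big_split leq_sum //= => s _.
  rewrite /t Ev_mul //; case: (boolP (Ev u s)) => //= E.
  have := Ydiff L1 gne E.
  case: (Xc (step s g) =P Xc g) => [->|] /=; last by rewrite addn1.
  by rewrite eq_sym addn0 lt0b.
have BY : (B <= \sum_s (Xc (step s g) != Xc g : nat))%N.
  by apply: leq_sum => s _; case: (Ev u s).
apply: (leq_trans A3); rewrite (_ : 6 = 3 * 2)%N // -mulnA leq_mul2l.
by rewrite (leq_trans A2) // leq_mul2l BY orbT.
Qed.

Definition Kc L (t : 'I_L) : nat :=
  \sum_(sg : {perm 'I_L}) \sum_(s : 'I_L) (pil (sites sg) s == t : nat).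

Lemma Kc_rot L (t : 'I_L) : Kc (ordS t) = Kc t.
Proof.
set r := perm (@ordS_inj L).
have rinj : injective (fun s : {perm 'I_L} => (s * r)%g).
  by move=> a b /(congr1 (fun s => (s * r^-1)%g)) /=; rewrite -!mulgA mulgV !mulg1.
rewrite /Kc [in LHS](reindex_inj rinj) /=; apply: eq_bigr => sg _.
rewrite [in LHS](reindex_inj (@ordS_inj L)) /=; apply: eq_bigr => s _.
have -> : sites (sg * r)%g = map (@ordS L) (sites sg).
  by rewrite sites_mul; apply: eq_map => x; rewrite permE.
by rewrite pil_rot (inj_eq (@ordS_inj L)).
Qed.

Lemma iter_ordS n (k : nat) : (k < n.+1)%N -> val (iter k (@ordS n.+1) (@ord0 n)) = k.
Proof.
elim: k => [//|k IH] lt; rewrite iterS /= IH ?modn_small //; exact: ltnW.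
Qed.

Lemma Kc_const n (t : 'I_n.+1) : Kc t = Kc (@ord0 n).
Proof.
have -> : t = iter t (@ordS n.+1) (@ord0 n) by apply: val_inj; rewrite iter_ordS.
elim: (nat_of_ord t) => [//|k IH]; by rewrite iterS Kc_rot.
Qed.

Lemma sum_Kc L : \sum_(t : 'I_L) Kc t = (#|{perm 'I_L}| * L)%N.
Proof.
rewrite /Kc exchange_big /= -sum1_card big_distrl /=; apply: eq_bigr => sg _.
rewrite exchange_big /= mul1n -[X in _ = X]card_ord -sum1_card; apply: eq_bigr => s _.
by rewrite (bigD1 (pil (sites sg) s)) //= eqxx big1 // => t /negbTE; rewrite eq_sym => ->.
Qed.

Lemma Kc_val L (t : 'I_L) : Kc t = #|{perm 'I_L}|.
Proof.
case: L t => [|n] t; first by case: t.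
have := sum_Kc n.+1; rewrite (eq_bigr (fun _ => Kc (@ord0 n))) => [|s _]; last exact: Kc_const.
rewrite sum_nat_const card_ord mulnC => /eqP; rewrite eqn_mul2r /= => /eqP <-.
exact: Kc_const.
Qed.

Lemma mean_Y L (g : state L) :
  \sum_(sg : {perm 'I_L}) Xc (step sg g) = (#|{perm 'I_L}| * Xc g)%N.
Proof.
have e : forall sg s, (g (pil (sites sg) s) : nat) = \sum_t ((pil (sites sg) s == t : nat) * g t)%N.
  move=> sg s; rewrite (bigD1 (pil (sites sg) s)) //= eqxx mul1n big1 ?addn0 // => t.
  by rewrite eq_sym => /negbTE ->.
rewrite /Xc big_distrr /=.
transitivity (\sum_(t : 'I_L) (Kc t * g t)%N); last first.
  by apply: eq_bigr => t _; rewrite Kc_val.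
transitivity (\sum_(sg : {perm 'I_L}) \sum_(s : 'I_L) \sum_(t : 'I_L)
   ((pil (sites sg) s == t : nat) * g t)%N).
  by apply: eq_bigr => sg _; rewrite step_pi; apply: eq_bigr => s _; rewrite ffunE e.
under eq_bigr do rewrite exchange_big /=.
rewrite exchange_big /=; apply: eq_bigr => t _.
by rewrite /Kc big_distrl /=; apply: eq_bigr => sg _; rewrite big_distrl.
Qed.

Definition cntT L (g : state L) n : nat :=
  #|[set ss : n.-tuple {perm 'I_L} | [forall i : 'I_n, ~~ absorbed (gam g ss i)]]|.

Lemma forall_ordS n (P : nat -> bool) :
  [forall i : 'I_n.+1, P i] = P 0%N && [forall i : 'I_n, P i.+1].
Proof.
apply/forallP/andP => [h|[h0 /forallP h] i].
  by split; [exact: (h ord0) | apply/forallP => i; exact: (h (lift ord0 i))].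
by case: i => [[|k] lt] //=; exact: (h (Ordinal (lt : k < n)%N)).
Qed.

Lemma card_setE (T : finType) (P : pred T) : #|[set x | P x]| = \sum_x (P x : nat).
Proof. by rewrite -sum1_card big_mkcond /=; apply: eq_bigr => x _; rewrite inE; case: (P x). Qed.

Lemma sum_tuple (T : finType) n (F : n.+1.-tuple T -> nat) :
  \sum_(ss : n.+1.-tuple T) F ss = \sum_(x : T) \sum_(ss : n.-tuple T) F [tuple of x :: ss].
Proof.
rewrite pair_big /=.
rewrite (reindex (fun p : T * n.-tuple T => [tuple of p.1 :: p.2])) /=.
  by apply: eq_bigr => -[x ss].
exists (fun ss : n.+1.-tuple T => (thead ss, [tuple of behead ss])) => [[x ss] _|ss _].
  by rewrite theadE; congr pair; apply: val_inj.
by rewrite [RHS]tuple_eta.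
Qed.

Lemma gam0 L (g : state L) n (ss : n.-tuple {perm 'I_L}) : gam g ss 0 = g.
Proof. by rewrite /gam take0. Qed.

Lemma gamS L (g : state L) (ss : seq {perm 'I_L}) x i :
  gam g (x :: ss) i.+1 = gam (step x g) ss i.
Proof. by []. Qed.

Lemma cnt0 L (g : state L) : cntT g 0 = 1%N.
Proof.
rewrite /cntT card_setE (eq_bigr (fun _ => 1%N)) => [|ss _]; last first.
  by have -> : [forall i : 'I_0, ~~ absorbed (gam g ss i)] by apply/forallP => -[].
by rewrite sum1_card card_tuple expn0.
Qed.

Lemma cntS L (g : state L) n :
  cntT g n.+1 = if absorbed g then 0%N else \sum_(x : {perm 'I_L}) cntT (step x g) n.
Proof.
rewrite /cntT card_setE sum_tuple.
case: ifP => ab.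
  by rewrite big1 // => x _; rewrite big1 // => ss _;
    rewrite (forall_ordS _ (fun k => ~~ absorbed (gam g [tuple of x :: ss] k))) gam0 ab.
apply: eq_bigr => x _; rewrite card_setE; apply: eq_bigr => ss _.
by rewrite (forall_ordS _ (fun k => ~~ absorbed (gam g [tuple of x :: ss] k))) gam0 ab.
Qed.

Local Open Scope ring_scope.

Definition Np L : nat := #|{perm 'I_L}|.

Lemma Np_gt0 L : (0 < Np L)%N.
Proof. by rewrite /Np; apply/card_gt0P; exists 1%g. Qed.

Lemma NpR_gt0 L : 0 < (Np L)%:R :> rat.
Proof. by rewrite ltr0n Np_gt0. Qed.

Lemma P_def L (g : state L) n : prob_T_ge g n = (cntT g n)%:R / ((Np L) ^ n)%:R.
Proof. by []. Qed.

Lemma P0 L (g : state L) : prob_T_ge g 0 = 1.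
Proof. by rewrite P_def cnt0 expn0 divr1. Qed.

Lemma PS L (g : state L) n : prob_T_ge g n.+1 =
  if absorbed g then 0 else (\sum_(x : {perm 'I_L}) prob_T_ge (step x g) n) / (Np L)%:R.
Proof.
rewrite P_def cntS; case: ifP => _; first by rewrite mul0r.
rewrite natr_sum -mulr_suml -mulrA; congr (_ * _).
by rewrite expnS natrM invfM mulrC.
Qed.

Lemma P_ge0 L (g : state L) n : 0 <= prob_T_ge g n.
Proof. by rewrite P_def divr_ge0 // ler0n. Qed.

Lemma avg_le L (F G : {perm 'I_L} -> rat) :
  (forall x, F x <= G x) -> (\sum_x F x) / (Np L)%:R <= (\sum_x G x) / (Np L)%:R.
Proof.
move=> h; rewrite ler_pM2r ?invr_gt0 ?NpR_gt0 //; exact: ler_sum.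
Qed.

Lemma avg_const L (c : rat) : (\sum_(x : {perm 'I_L}) c) / (Np L)%:R = c.
Proof.
rewrite sumr_const (_ : #|_| = Np L) // -[c *+ _]mulr_natr mulfK //.
by rewrite pnatr_eq0 -lt0n Np_gt0.
Qed.

Lemma P_mono L (g : state L) n : prob_T_ge g n.+1 <= prob_T_ge g n.
Proof.
elim: n g => [|n IH] g.
  rewrite PS P0; case: ifP => _ //; rewrite (eq_bigr (fun _ => 1)) ?avg_const // => x _.
  exact: P0.
rewrite PS [X in _ <= X]PS; case: ifP => _ //.
by apply: avg_le => x; apply: IH.
Qed.

Lemma P_anti L (g : state L) m n : (m <= n)%N -> prob_T_ge g n <= prob_T_ge g m.
Proof.
move=> /subnK <-; elim: (n - m)%N => [|k IH]; first by rewrite add0n.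
by rewrite addSn; apply: le_trans (P_mono _ _) IH.
Qed.

Lemma P_submult L m n (B : rat) : (forall h : state L, prob_T_ge h n <= B) -> 0 <= B ->
  forall g : state L, prob_T_ge g (m + n) <= prob_T_ge g m * B.
Proof.
move=> hB B0; elim: m => [|m IH] g; first by rewrite add0n P0 mul1r.
rewrite addSn !PS; case: ifP => _; first by rewrite mul0r.
rewrite [X in _ <= X]mulrAC [in X in _ <= X * _]mulr_suml; apply: avg_le => x; exact: IH.
Qed.

Lemma nonabs_witness L (g : state L) : ~~ absorbed g ->
  exists u : 'I_L, g (ordS u) != g (ordS (ordS u)).
Proof.
move=> nab; apply/existsP; apply: contraR nab => /existsPn h.
have h' : forall t : 'I_L, g (ordS t) = g t.
  move=> t; move: (h (ord_pred t)); rewrite ord_predK => /negPn /eqP ->.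
  done.
case: L g h h' => [|n] g _ h'.
  by rewrite /absorbed; apply/orP; left; apply/forallP => -[].
have c : forall t : 'I_n.+1, g t = g (@ord0 n).
  move=> t; have -> : t = iter t (@ordS n.+1) (@ord0 n) by apply: val_inj; rewrite iter_ordS.
  by elim: (nat_of_ord t) => [//|k IH]; rewrite iterS h'.
rewrite /absorbed; case e: (g ord0).
  by apply/orP; right; apply/forallP => t; rewrite c e.
by apply/orP; left; apply/forallP => t; rewrite c e.
Qed.

Lemma L_gt1 L (g : state L) (u : 'I_L) : g (ordS u) != g (ordS (ordS u)) -> (1 < L)%N.
Proof.
rewrite ltnNge; apply: contra => L1.
have all_eq : forall x y : 'I_L, x = y.
  by move=> [x hx] [y hy]; apply: val_inj => /=; lia.
have e : ordS (ordS u) = ordS u by apply: all_eq.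
by rewrite e.
Qed.

Definition fr L (g : state L) : rat := (Xc g)%:R * (L%:R - (Xc g)%:R).

Lemma sq_ge_ne (a b : nat) : ((a != b : nat)%:R : rat) <= (a%:R - b%:R) ^+ 2.
Proof.
case: eqP => [->|ne] /=; first by rewrite sqr_ge0.
case: (ltngtP a b) => h; last by rewrite h in ne.
- have : 1 <= b%:R - a%:R :> rat by rewrite -natrB ?ler1n ?subn_gt0 // ltnW.
  by move=> h1; rewrite -sqrrN opprB; nra.
- have : 1 <= a%:R - b%:R :> rat by rewrite -natrB ?ler1n ?subn_gt0 // ltnW.
  by move=> h1; nra.
Qed.

Lemma drift L (g : state L) : ~~ absorbed g ->
  (\sum_(x : {perm 'I_L}) fr (step x g)) / (Np L)%:R <= fr g - 1 / 6.
Proof.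
move=> nab; have [u gu] := nonabs_witness nab; have L1 := L_gt1 gu.
have gc := good_count L1 gu.
have mY := mean_Y g.
have sq : (Np L)%:R / 6 <= \sum_(x : {perm 'I_L}) ((Xc (step x g))%:R - (Xc g)%:R) ^+ 2 :> rat.
  apply: le_trans (ler_sum _ (fun x _ => sq_ge_ne _ _)).
  by rewrite -natr_sum ler_pdivrMr // -natrM ler_nat mulnC.
have N0 := NpR_gt0 L.
set N := Np L in gc mY sq N0 *.
set X := Xc g in sq *.
have e : forall x : {perm 'I_L}, fr (step x g) = fr g + (L%:R - 2 * X%:R) * ((Xc (step x g))%:R - X%:R)
    - ((Xc (step x g))%:R - X%:R) ^+ 2.
  by move=> x; rewrite /fr; ring.
rewrite (eq_bigr _ (fun x _ => e x)) sumrB big_split /= sumr_const -mulr_sumr sumrB sumr_const.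
have mY' : \sum_(x : {perm 'I_L}) (Xc (step x g))%:R = N%:R * X%:R :> rat.
  by rewrite -natr_sum mY natrM.
rewrite mY'; rewrite (_ : #|_| = N); last by [].
move: sq; set S := \sum_(x : {perm 'I_L}) _ => sq.
clearbody N X S; rewrite -[fr g *+ _]mulr_natr -[X%:R *+ _]mulr_natr.
have -> : N%:R * X%:R - X%:R * N%:R = 0 :> rat by ring.
rewrite mulr0 addr0 ler_pdivrMr //.
have : fr g * N%:R - S <= fr g * N%:R - N%:R / 6 by lra.
move=> h; apply: le_trans h _; rewrite le_eqVlt; apply/orP; left; apply/eqP; ring.
Qed.

Lemma Xc_le L (g : state L) : (Xc g <= L)%N.
Proof.
rewrite /Xc -[X in (_ <= X)%N]card_ord -sum1_card leq_sum // => t _.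
by case: (g t).
Qed.

Lemma fr_ge0 L (g : state L) : 0 <= fr g.
Proof.
rewrite /fr mulr_ge0 ?ler0n // subr_ge0 ler_nat; exact: Xc_le.
Qed.

Lemma fr_le L (g : state L) : fr g <= L%:R ^+ 2 / 4.
Proof.
rewrite /fr; set x := (Xc g)%:R; set l := L%:R.
have : 0 <= (l - 2 * x) ^+ 2 by rewrite sqr_ge0.
move=> h; nra.
Qed.

Lemma Sbound L n (g : state L) : \sum_(k < n) prob_T_ge g k.+1 <= 6 * fr g.
Proof.
elim: n g => [|n IH] g.
  by rewrite big_ord0; apply: mulr_ge0 => //; apply: fr_ge0.
rewrite big_ord_recl /=.
case: (boolP (absorbed g)) => ab.
  rewrite PS ab add0r big1 => [|k _]; last by rewrite PS ab.
  by apply: mulr_ge0 => //; apply: fr_ge0.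
have e1 : prob_T_ge g 1 = 1.
  by rewrite PS (negbTE ab) (eq_bigr (fun _ => 1)) ?avg_const // => x _; rewrite P0.
have e2 : \sum_(k < n) prob_T_ge g (lift ord0 k).+1 =
   (\sum_(x : {perm 'I_L}) \sum_(k < n) prob_T_ge (step x g) k.+1) / (Np L)%:R.
  rewrite exchange_big mulr_suml; apply: eq_bigr => k _.
  by rewrite /= PS (negbTE ab).
rewrite e1 e2.
have h1 := avg_le (fun x => IH (step x g)).
have h2 := drift ab.
have h3 : (\sum_(x : {perm 'I_L}) 6 * fr (step x g)) / (Np L)%:R =
          6 * ((\sum_(x : {perm 'I_L}) fr (step x g)) / (Np L)%:R).
  by rewrite -mulr_sumr mulrA.
rewrite h3 in h1; lra.
Qed.

Lemma P_block L (g : state L) : (1 <= L)%N -> prob_T_ge g (4 * L ^ 2) <= 1 / 2.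
Proof.
move=> L1.
set n := (4 * L ^ 2)%N.
have h : n%:R * prob_T_ge g n <= \sum_(k < n) prob_T_ge g k.+1.
  apply: (@le_trans _ _ (\sum_(k < n) prob_T_ge g n)).
    by rewrite sumr_const card_ord mulr_natl.
  apply: ler_sum => k _; apply: P_anti; exact: ltn_ord.
have := Sbound n g; have := fr_le g.
have nE : n%:R = 4 * L%:R ^+ 2 :> rat by rewrite /n natrM natrX.
rewrite nE in h.
have Lp : 1 <= L%:R :> rat by rewrite ler1n.
have P0' := P_ge0 g n.
move=> h1 h2; nra.
Qed.

Lemma P_blocks L (g : state L) a : (1 <= L)%N ->
  prob_T_ge g (4 * a * L ^ 2) <= (1 / 2) ^+ a.
Proof.
move=> L1; elim: a g => [|a IH] g.
  by rewrite mul0n P0 expr0.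
have -> : (4 * a.+1 * L ^ 2 = 4 * a * L ^ 2 + 4 * L ^ 2)%N by ring.
apply: le_trans (P_submult _ (fun h => P_block h L1) _ g) _ => //.
by rewrite exprSr ler_pM2r // IH.
Qed.


Unset Implicit Arguments.

Theorem claim5 (L : nat) (hL : (1 <= L)%N) (g0 : state L) (a : nat)
  (ha : (1 <= a)%N) :
  prob_T_ge g0 (4 * a * L ^ 2) <= L%:R / (2 ^ a)%:R.
Proof.
apply: le_trans (P_blocks g0 a hL) _.
rewrite expr_div_n expr1n natrX ler_pM2r ?invr_gt0 ?exprn_gt0 // ler1n //.
Qed.
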